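(* Let $\mathcal{S}=(\mathcal{S}_i)_{i\in\mathbb{N}}$, where $\mathcal{S}_i$ is the class of graphs all of whose connected components have at most $i$ vertices. Then for all integers $t$ and $\Delta$, the class of finite graphs of treewidth at most $t$ and maximum degree at most $\Delta$ is $\mathcal{S}$-layerable.
   Context: Graphs are unweighted with the shortest-path metric $d_G$. A real projection of $G$ is a map $L:V(G)\to\mathbb{R}$ with $|L(x)-L(y)|\le d_G(x,y)$ for all $x,y$. A set $A\subseteq V(G)$ is $(\infty,S)$-bounded with respect to $L$ if $|L(x)-L(y)|\le S$ for all $x,y\in A$. Given a sequence $\mathcal{L}=(\mathcal{L}_i)_{i\in\mathbb{N}}$ of graph classes with $\mathcal{L}_0\subseteq\mathcal{L}_1\subseteq\cdots$, a class $\mathcal{C}$ is $\mathcal{L}$-layerable if there is a function $f:\mathbb{R}^+\to\mathbb{N}$ such that every $G\in\mathcal{C}$ has a real projection $L$ such that for every $S>0$, every $(\infty,S)$-bounded set of $G$ induces a subgraph belonging to $\mathcal{L}_{f(S)}$. Treewidth is the usual graph parameter (minimum width of a tree-decomposition, width being the maximum bag size minus one). *)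

(* Defs.v *)
From Stdlib Require Import Reals.
From mathcomp Require Import all_boot.
Set Implicit Arguments. Unset Strict Implicit. Unset Printing Implicit Defensive.

Definition simple_graph (T : finType) (e : rel T) : Prop :=
  symmetric e /\ irreflexive e.

(* d_G(x,y) <= k : there is a walk of length exactly k from x to y.
   (d_G(x,y) is the least such k; infinite if none exists.) *)
Definition walk_of_len (T : finType) (e : rel T) (x y : T) (k : nat) : Prop :=
  exists p : seq T, size p = k /\ path e x p /\ last x p = y.

(* Real projection: |L x - L y| <= d_G(x,y) for all x y.  Since d_G(x,y) is
   the minimum length of a walk from x to y (and +oo if none), this is
   exactly: |L x - L y| <= k for every walk of length k from x to y. *)
Definition real_projection (T : finType) (e : rel T) (L : T -> R) : Prop :=
  forall x y k, walk_of_len e x y k -> Rle (Rabs (Rminus (L x) (L y))) (INR k).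

Definition inf_S_bounded (T : finType) (L : T -> R) (S : R) (A : {set T}) : Prop :=
  forall x y, x \in A -> y \in A -> Rle (Rabs (Rminus (L x) (L y))) S.

Definition induced (T : finType) (e : rel T) (A : {set T}) : rel T :=
  [rel x y | [&& x \in A, y \in A & e x y]].

Definition components_at_most (T : finType) (e : rel T) (A : {set T}) (n : nat) : Prop :=
  forall x, x \in A -> #|[set y in A | connect (induced e A) x y]| <= n.

Definition max_degree_le (T : finType) (e : rel T) (D : nat) : Prop :=
  forall x, #|[set y | e x y]| <= D.

Definition connected_set (I : finType) (r : rel I) (X : {set I}) : Prop :=
  forall i j, i \in X -> j \in X -> connect (induced r X) i j.

Definition acyclic (I : finType) (r : rel I) : Prop :=
  ~ exists (x : I) (p : seq I),
      2 <= size p /\ uniq (x :: p) /\ path r x p /\ r (last x p) x.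

Definition is_tree (I : finType) (r : rel I) : Prop :=
  0 < #|I| /\ simple_graph r /\ connected_set r [set: I] /\ acyclic r.

Definition tree_decomposition_width_le (T : finType) (e : rel T)
    (I : finType) (r : rel I) (B : I -> {set T}) (t : nat) : Prop :=
  [/\ is_tree r,
      forall v : T, exists i, v \in B i,
      forall u v : T, e u v -> exists i, (u \in B i) && (v \in B i),
      forall v : T, connected_set r [set i | v \in B i]
    & forall i, #|B i| <= t.+1].

Definition treewidth_le (T : finType) (e : rel T) (t : nat) : Prop :=
  exists (I : finType) (r : rel I) (B : I -> {set T}),
    tree_decomposition_width_le e r B t.

Definition S_layerable (C : forall T : finType, rel T -> Prop) : Prop :=
  exists f : R -> nat,
    forall (T : finType) (e : rel T), simple_graph e -> C T e ->
      exists L : T -> R, real_projection e L /\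
        forall S : R, Rlt 0 S ->
          forall A : {set T}, inf_S_bounded L S A -> components_at_most e A (f S).

(* Main.v *)
Require Import Defs.
From Stdlib Require Import Reals Lra Lia ZArith.
From mathcomp Require Import all_boot zify.
Set Implicit Arguments. Unset Strict Implicit. Unset Printing Implicit Defensive.

Lemma card_bigcup_le (I T : finType) (P : pred I) (F : I -> {set T}) :
  #|\bigcup_(i | P i) F i| <= \sum_(i | P i) #|F i|.
Proof.
elim/big_rec2: _ => [|i U n Pi IH]; first by rewrite cards0.
exact: (leq_trans (leq_card_setU _ _).1 (leq_add (leqnn _) IH)).
Qed.

Section GraphBasics.
Variables (T : finType) (e : rel T).
Hypothesis esym : symmetric e.
Implicit Types A B R : {set T}.

Definition comp (A : {set T}) (x : T) := [set y in A | connect (induced e A) x y].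

Lemma induced_sym A : symmetric (induced e A).
Proof. by move=> x y; rewrite /induced /= esym; do 2 case: (_ \in A). Qed.

Lemma connect_in A x y : x \in A -> connect (induced e A) x y -> y \in A.
Proof.
move=> xA /connectP[p]; elim: p x xA => [|z p IH] x xA /=; first by move=> _ ->.
by case/andP=> /and3P[_ zA _] pz; apply: IH.
Qed.

Lemma connect_mono A B x y : A \subset B -> connect (induced e A) x y ->
  connect (induced e B) x y.
Proof.
move=> /subsetP AB; apply: connect_sub => u v /and3P[uA vA euv].
by apply: connect1; rewrite /induced /= (AB u uA) (AB v vA) euv.
Qed.

Lemma connect_inv A (P : pred T) x y :
  (forall u v, u \in A -> v \in A -> e u v -> P u -> P v) -> P x -> x \in A ->
  connect (induced e A) x y -> P y /\ connect (induced e [set z in A | P z]) x y.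
Proof.
move=> Hinv Px xA /connectP[p]; elim: p x Px xA => [|z p IH] x Px xA /=.
  by move=> _ ->; split=> //; apply: connect0.
case/andP=> /and3P[_ zA exz] pz yl.
have Pz : P z by apply: (Hinv x).
have [Py Cz] := IH z Pz zA pz yl; split=> //.
apply: connect_trans Cz; apply: connect1; by rewrite /induced /= !inE xA zA Px Pz exz.
Qed.

Lemma comp_sym A x y : y \in comp A x -> x \in comp A y.
Proof.
rewrite !inE => /andP[yA cxy]; rewrite (sym_connect_sym (induced_sym A)) cxy andbT.
rewrite (sym_connect_sym (induced_sym A)) in cxy.
by apply: connect_in cxy.
Qed.

Lemma comp_eq A x y : y \in comp A x -> comp A y = comp A x.
Proof.
move=> yx; have xy := comp_sym yx.
move: yx xy; rewrite !inE => /andP[yA cxy] /andP[xA cyx].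
apply/setP => z; rewrite !inE; case: (z \in A) => //=.
apply/idP/idP => H; [exact: connect_trans cxy H | exact: connect_trans cyx H].
Qed.

Lemma comp_self A x : x \in A -> x \in comp A x.
Proof. by move=> xA; rewrite inE xA connect0. Qed.

Lemma comp_sub A x : comp A x \subset A.
Proof. by apply/subsetP => y; rewrite inE => /andP[]. Qed.

Lemma comp_connected A x : x \in A -> forall y z, y \in comp A x -> z \in comp A x ->
  connect (induced e (comp A x)) y z.
Proof.
move=> xA y z yx zx.
have key : forall w, w \in comp A x -> connect (induced e (comp A x)) x w.
  move=> w; rewrite inE => /andP[_ cw].
  have Hinv : forall u v, u \in A -> v \in A -> e u v -> u \in comp A x -> v \in comp A x.
    move=> u v uA vA euv; rewrite !inE vA => /andP[_ cu].
    by apply: connect_trans cu (connect1 _); rewrite /induced /= uA vA euv.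
  have [_ C] := @connect_inv A (fun u => u \in comp A x) x w Hinv (comp_self xA) xA cw.
  apply: connect_mono C; apply/subsetP => u; rewrite !inE => /andP[_ ->] //.
have := key y yx; rewrite (sym_connect_sym (induced_sym _)) => Cy.
exact: connect_trans Cy (key z zx).
Qed.

Definition Nb (R : {set T}) := [set z | [exists r in R, e r z]].

Lemma exit_comp A R x y : x \in A :\: R -> connect (induced e A) x y -> y \in R ->
  exists2 z, z \in comp (A :\: R) x & z \in Nb R.
Proof.
move=> xAR /connectP[p]; elim: p x xAR => [|w p IH] x xAR /=.
  by move=> _ -> yR; move: xAR; rewrite inE yR.
case/andP=> /and3P[xA wA exw] pw yl yR.
case wR: (w \in R).
  exists x; first by apply: comp_self.
  by rewrite inE; apply/existsP; exists w; rewrite wR esym.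
have wAR : w \in A :\: R by rewrite inE wR wA.
have [z zw zN] := IH w wAR pw yl yR; exists z => //.
rewrite -(@comp_eq _ x w) //.
rewrite inE wAR; apply: connect1; by rewrite /induced /= xAR wAR.
Qed.

End GraphBasics.


Section Rooted.
Variables (I : finType) (r : rel I) (rho : I).
Hypotheses (rsym : symmetric r) (rirr : irreflexive r) (racyc : acyclic r)
  (conn : forall i, connect r rho i).

Definition walkP (i : I) (n : nat) : bool :=
  [exists p : n.-tuple I, path r rho p && (last rho p == i)].

Lemma walkPP i n : reflect (exists p : seq I, [/\ size p = n, path r rho p & last rho p = i])
  (walkP i n).
Proof.
apply: (iffP existsP) => [[p /andP[pp /eqP pl]]|[p [sp pp pl]]].
  by exists p; rewrite size_tuple.
have sp' : size p == n by rewrite sp.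
by exists (Tuple sp'); rewrite /= pp pl eqxx.
Qed.

Lemma ex_walk i : exists n, walkP i n.
Proof.
have /connectP[p pp pl] := conn i.
by exists (size p); apply/walkPP; exists p.
Qed.

Definition depth i := ex_minn (ex_walk i).

Lemma depth_walk i : walkP i (depth i).
Proof. by rewrite /depth; case: ex_minnP. Qed.

Lemma depth_min i n : walkP i n -> depth i <= n.
Proof. by rewrite /depth; case: ex_minnP => m _ H /H. Qed.

Lemma depth_rho : depth rho = 0.
Proof. by apply/eqP; rewrite -leqn0; apply: depth_min; apply/walkPP; exists [::]. Qed.

Lemma depth0 i : depth i = 0 -> i = rho.
Proof.
move=> d0; have /walkPP[p [sp _ pl]] := depth_walk i.
by move: sp; rewrite d0 => /size0nil ep; rewrite -pl ep.
Qed.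

Lemma depth_edge i j : r i j -> depth j <= (depth i).+1.
Proof.
move=> rij; have /walkPP[p [sp pp pl]] := depth_walk i.
apply: depth_min; apply/walkPP; exists (rcons p j).
by rewrite size_rcons rcons_path last_rcons sp pp pl rij.
Qed.

Lemma depth_down i : 0 < depth i -> exists j, r i j && ((depth j).+1 == depth i).
Proof.
move=> dpos; have /walkPP[p [sp pp pl]] := depth_walk i.
case/lastP: p sp pp pl => [|p' z]; first by move=> sp; rewrite -sp in dpos.
rewrite size_rcons rcons_path last_rcons => sp /andP[pp' rz] zi.
exists (last rho p'); rewrite rsym -zi rz /=.
have h1 : depth (last rho p') <= size p'.
  by apply: depth_min; apply/walkPP; exists p'.
have h2 := depth_edge rz; rewrite zi -sp in h2 *.
apply/eqP; lia.
Qed.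

Definition par i := odflt i [pick j | r i j && ((depth j).+1 == depth i)].

Lemma parP i : 0 < depth i -> r i (par i) /\ (depth (par i)).+1 = depth i.
Proof.
move=> /depth_down ex; rewrite /par; case: pickP => [j /andP[rij /eqP ->] //|H].
by case: ex => j; rewrite H.
Qed.

Lemma par_rho : par rho = rho.
Proof.
rewrite /par; case: pickP => [j /andP[_ /eqP]|//].
by rewrite depth_rho.
Qed.

Lemma depth_par i : depth (par i) = (depth i).-1.
Proof.
case: (posnP (depth i)) => [d0|dp]; last by have [_ <-] := parP dp.
by rewrite (depth0 d0) par_rho depth_rho.
Qed.

Lemma edge_par i j : r i j -> par i = j \/ par j = i.
Proof.
move=> rij; case: (par i =P j) => [|pij]; first by left.
case: (par j =P i) => [|pji]; first by right.
exfalso.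
pose r' := [rel x y | r x y && ~~ (((x == i) && (y == j)) || ((x == j) && (y == i)))].
have r'sym : symmetric r'.
  by move=> x y; rewrite /r' /= rsym; case: (x == i); case: (y == j); case: (x == j);
     case: (y == i); rewrite ?andbF ?andbT ?orbF ?orbT.
have up : forall n a, depth a <= n -> connect r' a rho.
  elim=> [|n IH] a.
    by rewrite leqn0 => /eqP /depth0 ->; apply: connect0.
  case: (posnP (depth a)) => [/depth0 -> _|dpos da]; first by apply: connect0.
  have [rap dp] := parP dpos.
  apply: (connect_trans (connect1 _) (IH (par a) _)); last by rewrite -ltnS dp.
  rewrite /r' /= rap /=; apply/negP => /orP[/andP[/eqP ai /eqP pj]|/andP[/eqP aj /eqP pi]].
    by apply: pij; rewrite -ai.
  by apply: pji; rewrite -aj.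
have cij : connect r' i j.
  apply: connect_trans (up _ i (leqnn _)) _.
  by rewrite (sym_connect_sym r'sym); apply: up (leqnn _).
case/connectP: cij => p pp pl.
move: pl; case: (shortenP pp) => p' pp' up' _ pl'.
apply: racyc; exists i, p'; split=> //.
- case: p' pp' up' pl' => [|a [|b q]] /=.
  + by move=> _ _ ij; move: rij; rewrite ij rirr.
  + by move=> /andP[ra _] _ aj; move: ra; rewrite /r' /= -aj !eqxx andbF.
  + by [].
- have sr : subrel r' r by move=> x y /andP[].
  split=> //; split; last by rewrite -pl' rsym. exact: (@sub_path I r' r sr i p' pp').
Qed.

Definition anc (d : nat) (i : I) := iter (depth i - d) par i.

Lemma depth_iter n i : depth (iter n par i) = depth i - n.
Proof. by elim: n => [|n IH] /=; rewrite ?subn0 // depth_par IH subnS. Qed.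

Lemma depth_anc d i : d <= depth i -> depth (anc d i) = d.
Proof. by move=> di; rewrite /anc depth_iter subKn. Qed.

Lemma anc_self i : anc (depth i) i = i.
Proof. by rewrite /anc subnn. Qed.

Lemma anc_anc a b x : a <= b -> b <= depth x -> anc a (anc b x) = anc a x.
Proof.
move=> ab bx; rewrite /anc depth_iter subKn // -iterD; congr iter; lia.
Qed.

Lemma anc_par a i : a < depth i -> anc a (par i) = anc a i.
Proof.
move=> ai; rewrite /anc depth_par.
have -> : depth i - a = ((depth i).-1 - a).+1 by lia.
by rewrite iterSr.
Qed.

Lemma anc_edge a x y : r x y -> a <= depth x -> a <= depth y -> anc a x = anc a y.
Proof.
move=> rxy ax ay; case: (edge_par rxy) => [py|px].
  have dpos : 0 < depth x.
    by case: (posnP (depth x)) => // /depth0 xr; move: rxy; rewrite -py xr par_rho rirr.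
  have := parP dpos; rewrite py => -[_ dy].
  by rewrite -py anc_par //; lia.
have dpos : 0 < depth y.
  by case: (posnP (depth y)) => // /depth0 yr; move: rxy; rewrite -px yr par_rho rirr.
have := parP dpos; rewrite px => -[_ dx].
by rewrite -px anc_par //; lia.
Qed.

Lemma anc_walk (Z : {set I}) a x y : (forall z, z \in Z -> a <= depth z) -> x \in Z ->
  connect (induced r Z) x y -> anc a x = anc a y.
Proof.
move=> Za xZ /connectP[p]; elim: p x xZ => [|z p IH] x xZ /=; first by move=> _ ->.
case/andP => /and3P[_ zZ rxz] pz yl.
by rewrite (anc_edge rxz (Za _ xZ) (Za _ zZ)); apply: IH.
Qed.

Lemma anc_cut (Z : {set I}) a x y : x \in Z -> connect (induced r Z) x y ->
  depth y < a -> a <= depth x -> anc a x \in Z.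
Proof.
move=> xZ /connectP[p]; elim: p x xZ => [|z p IH] x xZ /=.
  by move=> _ -> ya ay; move: (leq_trans ya ay); rewrite ltnn.
case/andP => /and3P[_ zZ rxz] pz yl ya ax.
case: (leqP a (depth z)) => az.
  by rewrite (anc_edge rxz ax az); apply: IH.
(* z below level a: z is the parent of x, and depth x = a *)
have dx : depth x = a.
  apply/eqP; rewrite eqn_leq ax andbT.
  rewrite rsym in rxz; have := depth_edge rxz; lia.
by rewrite -dx anc_self.
Qed.

Definition anc_le i j := (depth i <= depth j) && (anc (depth i) j == i).

Lemma anc_le_trans a b c : anc_le a b -> anc_le b c -> anc_le a c.
Proof.
case/andP=> ab /eqP aa /andP[bc /eqP bb]; rewrite /anc_le (leq_trans ab bc) /=.
by apply/eqP; rewrite -{2}aa -bb anc_anc.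
Qed.

Lemma anc_le_rho i : anc_le rho i.
Proof.
rewrite /anc_le depth_rho /=; apply/eqP.
have : depth (anc 0 i) = 0 by rewrite depth_anc.
by move/depth0.
Qed.

End Rooted.


Section TD.
Variables (T : finType) (e : rel T) (I : finType) (r : rel I) (B : I -> {set T}) (t : nat)
  (rho : I).
Hypothesis esym : symmetric e.
Hypothesis td : tree_decomposition_width_le e r B t.

Lemma td_tree : is_tree r. Proof. by case: td. Qed.
Lemma rsym : symmetric r. Proof. by case: td_tree => _ [[]]. Qed.
Lemma rirr : irreflexive r. Proof. by case: td_tree => _ [[]]. Qed.
Lemma racyc : acyclic r. Proof. by case: td_tree => _ [_ []]. Qed.
Lemma rconn : forall i, connect r rho i.
Proof.
case: td_tree => _ [_ [C _]] i.
have := C rho i (in_setT _) (in_setT _).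
by apply: connect_sub => x y /and3P[_ _ rxy]; apply: connect1.
Qed.
Lemma td_cover v : exists i, v \in B i. Proof. by case: td => _ H _ _ _; apply: H. Qed.
Lemma td_edge u v : e u v -> exists i, (u \in B i) && (v \in B i).
Proof. by case: td => _ _ H _ _; apply: H. Qed.
Lemma td_sub v : connected_set r [set i | v \in B i]. Proof. by case: td => _ _ _ H _; apply: H. Qed.
Lemma td_width i : #|B i| <= t.+1. Proof. by case: td => _ _ _ _ H; apply: H. Qed.

Local Notation dep := (depth rconn).
Local Notation al := (anc_le rconn).
Local Notation an := (anc rconn).

Definition Nv v := [set i | v \in B i].
Definition top v := [arg min_(i < xchoose (td_cover v) in Nv v) dep i].

Lemma top_spec v : v \in B (top v) /\ forall j, v \in B j -> dep (top v) <= dep j.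
Proof.
rewrite /top; case: arg_minnP => [|i]; first by rewrite inE; exact: (xchooseP (td_cover v)).
by rewrite inE => vi H; split=> // j vj; apply: H; rewrite inE.
Qed.

Lemma top_in v : v \in B (top v). Proof. by case: (top_spec v). Qed.

Lemma top_anc v j : v \in B j -> al (top v) j.
Proof.
move=> vj; have [vt tmin] := top_spec v.
rewrite /anc_le tmin //=.
have jN : j \in Nv v by rewrite inE.
have tN : top v \in Nv v by rewrite inE.
have C := td_sub jN tN.
rewrite (anc_walk rsym rirr racyc (Z := Nv v) _ jN C) ?anc_self //.
by move=> z; rewrite inE => /tmin.
Qed.

Lemma between v j m : v \in B j -> al m j -> dep (top v) <= dep m -> v \in B m.
Proof.
move=> vj /andP[mj /eqP mm] tm.
have [vt tmin] := top_spec v.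
have /andP[_ /eqP tj] := top_anc vj.
case: (ltngtP (dep (top v)) (dep m)) tm => // [lt _|eq _]; last first.
  by rewrite -mm -eq tj.
have jN : j \in Nv v by rewrite inE.
have tN : top v \in Nv v by rewrite inE.
have C := td_sub jN tN.
have := anc_cut rsym rirr racyc jN C lt mj.
by rewrite mm inE.
Qed.

Lemma al_comparable a b j : al a j -> al b j -> dep a <= dep b -> al a b.
Proof.
move=> /andP[aj /eqP aa] /andP[bj /eqP bb] ab; rewrite /anc_le ab /=.
by apply/eqP; rewrite -bb (anc_anc rsym) // aa.
Qed.

Lemma edge_bag i z w : e z w -> al i (top z) -> ~~ al i (top w) -> w \in B i.
Proof.
move=> ezw izt iwt; have [j /andP[zj wj]] := td_edge ezw.
have ij := anc_le_trans rsym izt (top_anc zj).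
have wtj := top_anc wj.
case: (leqP (dep i) (dep (top w))) => [le|lt].
  by rewrite (al_comparable ij wtj le) in iwt.
exact: between wj ij (ltnW lt).
Qed.

Lemma edge_child i z w : e z w -> dep i < dep (top z) -> dep i < dep (top w) ->
  an (dep i).+1 (top z) = an (dep i).+1 (top w).
Proof.
move=> ezw iz iw; have [j /andP[zj wj]] := td_edge ezw.
have /andP[zj' /eqP zz] := top_anc zj.
have /andP[wj' /eqP ww] := top_anc wj.
by rewrite -zz -ww !(anc_anc rsym).
Qed.

Definition DD (U : {set T}) i := [set v in U | al i (top v)].

Lemma DD_rho U : DD U rho = U.
Proof. by apply/setP=> v; rewrite inE (anc_le_rho rsym) andbT. Qed.

Theorem separator p n : forall U S : {set T}, S \subset U -> #|S| <= n ->
  exists X : {set T}, [/\ X \subset U, p.+1 * #|X| <= t.+1 * #|S| &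
    forall x, x \in U :\: X ->
      #|[set y in S | connect (induced e (U :\: X)) x y]| <= p].
Proof.
elim: n => [|n IH] U S SU Sn.
  exists set0; split; rewrite ?sub0set ?cards0 ?muln0 // => x _.
  by apply: (leq_trans (subset_leq_card _) (leq_trans Sn (leq0n p))); apply/subsetP=> y; rewrite inE => /andP[].
case: (leqP #|S| p) => [Sp|Sp].
  exists set0; split; rewrite ?sub0set ?cards0 ?muln0 // => x _.
  by apply: (leq_trans (subset_leq_card _) Sp); apply/subsetP=> y; rewrite inE => /andP[].
pose heavy i := p < #|S :&: DD U i|.
have hrho : heavy rho.
  by rewrite /heavy DD_rho; move/setIidPl: SU => ->.
case: (arg_maxnP dep hrho) => i hi imax.
set D := DD U i.
pose U' := U :\: D; pose S' := S :\: D.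
have S'U' : S' \subset U'.
  by apply/subsetP=> y; rewrite !inE => /andP[-> yS]; rewrite (subsetP SU).
have S'n : #|S'| <= n.
  have := cardsID D S; rewrite -/S'; move: hi; rewrite /heavy -/D; lia.
have [X' [X'U' X'card X'comp]] := IH U' S' S'U' S'n.
pose Xi := [set u in U | u \in B i].
exists (Xi :|: X'); split.
- rewrite subUset; apply/andP; split; first by apply/subsetP=> u; rewrite inE => /andP[].
  by apply: subset_trans X'U' _; apply/subsetP=> u; rewrite inE => /andP[].
- have c1 : #|Xi :|: X'| <= #|Xi| + #|X'| by apply: (leq_card_setU _ _).1.
  have c2 : #|Xi| <= t.+1.
    apply: leq_trans (td_width i); apply: subset_leq_card.
    by apply/subsetP=> u; rewrite inE => /andP[].
  have c3 := cardsID D S; rewrite -/S' in c3; move: hi; rewrite /heavy -/D => hi.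
  nia.
- set X := Xi :|: X'.
  have notXi : forall w, w \in U :\: X -> w \notin B i.
    move=> w /setDP[wU wX]; apply/negP => wB; apply: (negP wX).
    by rewrite inE; apply/orP; left; rewrite inE wU wB.
  move=> x xUX; have xXi' := notXi x xUX.
  have /setDP[xU xX] := xUX.
  have xX' : x \notin X' by apply: contra xX; rewrite inE => ->; rewrite orbT.
  case xD : (x \in D).
  +
    have xt : al i (top x) by move: xD; rewrite inE => /andP[].
    have dx : dep i < dep (top x).
      case/andP: xt => le /eqP aa; rewrite ltn_neqAle le andbT.
      apply/negP => /eqP eqd; apply: (negP xXi').
      by have := top_in x; rewrite -aa eqd anc_self.
    pose c := an (dep i).+1 (top x).
    pose Q z := [&& al i (top z), dep i < dep (top z) & an (dep i).+1 (top z) == c].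
    have Qinv : forall u v, u \in U :\: X -> v \in U :\: X -> e u v -> Q u -> Q v.
      move=> u v uUX vUX euv /and3P[iu du /eqP cu].
      have vB := notXi v vUX.
      have iv : al i (top v).
        case iv: (al i (top v)) => //; exfalso; apply: (negP vB).
        by apply: edge_bag euv iu _; rewrite iv.
      have dv : dep i < dep (top v).
        case/andP: (iv) => le /eqP aa; rewrite ltn_neqAle le andbT.
        apply/negP => /eqP eqd; apply: (negP vB).
        by have := top_in v; rewrite -aa eqd anc_self.
      by rewrite /Q iv dv -cu (edge_child euv du dv) eqxx.
    have Qx : Q x by rewrite /Q xt dx eqxx.
    have cdep : dep c = (dep i).+1 by rewrite (depth_anc rsym).
    have clight : #|S :&: DD U c| <= p.
      rewrite leqNgt; apply/negP => hc; have h := imax c hc; simpl in h; lia.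
    apply: leq_trans clight; apply: subset_leq_card; apply/subsetP => y.
    rewrite !inE => /andP[yS cy].
    have [Qy _] := connect_inv Qinv Qx xUX cy.
    case/and3P: Qy => _ dy /eqP cy'.
    rewrite yS (subsetP SU) //= /anc_le cdep dy /= -cy' eqxx //.
  +
    pose Q z := ~~ al i (top z).
    have Qinv : forall u v, u \in U :\: X -> v \in U :\: X -> e u v -> Q u -> Q v.
      move=> u v uUX _ euv Qu.
      have uB := notXi u uUX.
      apply/negP => iv; apply: (negP uB).
      by rewrite esym in euv; apply: (edge_bag euv iv Qu).
    have Qx : Q x by rewrite /Q; move: xD; rewrite inE xU /= => ->.
    have xU' : x \in U' :\: X' by rewrite in_setD xX' /U' in_setD xD xU.
    apply: leq_trans (X'comp x xU'); apply: subset_leq_card; apply/subsetP => y.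
    rewrite inE => /andP[yS cy].
    have [Qy C] := connect_inv Qinv Qx xUX cy.
    have yD : y \notin D by rewrite inE negb_and; apply/orP; right; exact: Qy.
    rewrite inE /S' in_setD yS yD /=; apply: connect_mono C.
    apply/subsetP => z; rewrite inE => /andP[/setDP[zU zX] Qz].
    have zX' : z \notin X' by apply: contra zX => zX'; rewrite inE zX' orbT.
    rewrite in_setD zX' /U' in_setD zU andbT /=.
    by rewrite inE negb_and; apply/orP; right; exact: Qz.
Qed.

End TD.


Section Main.
Variables (T : finType) (e : rel T) (dd K : nat).
Hypothesis esym : symmetric e.
Hypothesis ddpos : 0 < dd.
Hypothesis Kpos : 0 < K.
Hypothesis deg : forall x, #|[set y | e x y]| <= dd.
Hypothesis sep : forall U S : {set T}, S \subset U -> exists X : {set T},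
  [/\ X \subset U, (2 * dd * K) * #|X| <= K * #|S| &
    forall x, x \in U :\: X ->
      #|[set y in S | connect (induced e (U :\: X)) x y]| <= (2 * dd * K).-1].

Definition MM := 4 * dd * dd * K.
Definition WW := MM + 2 * dd * K + 1.
Fixpoint gg (s : nat) : nat := if s is s'.+1 then WW + WW * dd * gg s' else WW.

Definition Pcl (U S : {set T}) (L : T -> nat) :=
  [/\ forall v, v \in S -> L v = 0,
      forall u v, u \in U -> v \in U -> e u v -> L u <= (L v).+1,
      forall s, #|[set v in U | L v <= s]| <= gg s
    & forall (A : {set T}) x a s, x \in A -> comp e A x \subset U ->
       (forall y, y \in comp e A x -> a <= L y <= a + s) -> #|comp e A x| <= gg s].

Definition connU (U : {set T}) := forall x y, x \in U -> y \in U -> connect (induced e U) x y.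

Lemma Nb_card (R : {set T}) : #|Nb e R| <= #|R| * dd.
Proof.
have sub : Nb e R \subset \bigcup_(r in R) [set z | e r z].
  apply/subsetP => z; rewrite inE => /exists_inP[r rR erz].
  by apply/bigcupP; exists r => //; rewrite inE.
apply: leq_trans (subset_leq_card sub) _.
apply: leq_trans (card_bigcup_le _ _) _.
rewrite -sum_nat_const; apply: leq_sum => r _; exact: deg.
Qed.

Lemma claim_empty (U S : {set T}) : U = set0 -> S \subset U -> exists L, Pcl U S L.
Proof.
move=> U0 SU; exists (fun _ => 0); split.
- by [].
- by [].
- move=> s; rewrite U0; apply: leq_trans (leq0n _).
  by rewrite leqn0 cards_eq0; apply/eqP/setP => v; rewrite !inE.
- move=> A x a s xA; rewrite U0 subset0 => /eqP c0.
  by have := comp_self e xA; rewrite c0 inE.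
Qed.

Theorem claim n : forall U S : {set T}, #|U| <= n -> connU U -> S \subset U -> #|S| <= MM ->
  exists L, Pcl U S L.
Proof.
elim: n => [|n IH] U S Un cU SU SM.
  by apply: claim_empty SU; apply/eqP; rewrite -cards_eq0 -leqn0.
case: (set_0Vmem U) => [U0|[x0 x0U]]; first exact: claim_empty SU.
have [X [XU Xc Xcomp]] := sep SU.
set R := S :|: X :|: [set x0].
have x0R : x0 \in R by rewrite !inE eqxx !orbT.
have RU : R \subset U by rewrite !subUset SU XU sub1set x0U.
have Xsz : #|X| <= 2 * dd * K.
  have h : (2 * dd * K) * #|X| <= (2 * dd * K) * (2 * dd * K).
    apply: leq_trans Xc _; rewrite /MM in SM; nia.
  by rewrite leq_pmul2l ?muln_gt0 ?ddpos ?Kpos in h.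
have Rsz : #|R| <= WW.
  have h1 : #|R| <= #|S :|: X| + #|[set x0]| by apply: (leq_card_setU _ _).1.
  have h2 : #|S :|: X| <= #|S| + #|X| by apply: (leq_card_setU _ _).1.
  rewrite cards1 in h1; rewrite /WW; lia.
pose Kc y := comp e (U :\: R) y.
have Ksub : forall y, Kc y \subset U :\: R by move=> y; apply: comp_sub.
have Kn : forall y, #|Kc y| <= n.
  move=> y; apply: leq_trans (subset_leq_card (Ksub y)) _.
  have := cardsID R U; have : 0 < #|U :&: R|.
    by apply/card_gt0P; exists x0; rewrite inE x0U x0R.
  lia.
have SSsz : forall y, y \in U :\: R -> #|Kc y :&: Nb e R| <= MM.
  move=> y yUR.
  pose Sy := [set w in S | connect (induced e (U :\: X)) y w].
  pose Z := X :|: [set x0] :|: Sy.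
  have yUX : y \in U :\: X.
    case/setDP: yUR => yU yR; rewrite in_setD yU andbT; apply: contra yR => yX.
    by rewrite !inE yX orbT.
  have URX : U :\: R \subset U :\: X.
    apply/subsetP => w /setDP[wU wR]; rewrite in_setD wU andbT; apply: contra wR => wX.
    by rewrite !inE wX orbT.
  have sub : Kc y :&: Nb e R \subset \bigcup_(r in Z) [set z | e r z].
    apply/subsetP => z; rewrite inE => /andP[zK]; rewrite inE => /exists_inP[r rR erz].
    apply/bigcupP; exists r; last by rewrite inE.
    have : r \in S \/ r \in X \/ r = x0.
      by move: rR; rewrite !inE -orbA => /or3P[->|->|/eqP->]; auto.
    rewrite !inE.
    case=> [rS|[rX|rx]]; last by rewrite rx eqxx orbT.
      2: by rewrite rX.
    case rX: (r \in X) => //=.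
    rewrite rS /=; apply/orP; right.
    have zUX : z \in U :\: X by apply: (subsetP URX); apply: (subsetP (Ksub y)).
    have rUX : r \in U :\: X by rewrite in_setD rX (subsetP SU).
    move: zK; rewrite inE => /andP[_ cyz].
    apply: connect_trans (connect_mono URX cyz) (connect1 _).
    by rewrite /induced /= zUX rUX esym.
  apply: leq_trans (subset_leq_card sub) _.
  apply: leq_trans (card_bigcup_le _ _) _.
  apply: leq_trans (_ : \sum_(r in Z) dd <= _); first by apply: leq_sum => r _; exact: deg.
  rewrite sum_nat_const.
  have hZ : #|Z| <= #|X| + 1 + #|Sy|.
    have h1 : #|Z| <= #|X :|: [set x0]| + #|Sy| by apply: (leq_card_setU _ _).1.
    have h2 : #|X :|: [set x0]| <= #|X| + #|[set x0]| by apply: (leq_card_setU _ _).1.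
    rewrite cards1 in h2; lia.
  have hSy : #|Sy| <= (2 * dd * K).-1 := Xcomp y yUX.
  have pos : 0 < 2 * dd * K by rewrite !muln_gt0 ddpos Kpos.
  have hZ' : #|Z| <= 4 * dd * K by lia.
  apply: leq_trans (leq_mul hZ' (leqnn dd)) _.
  by rewrite /MM mulnAC.
have ch : forall C : {set T}, exists L : T -> nat,
    forall y, y \in U :\: R -> C = Kc y -> Pcl C (C :&: Nb e R) L.
  move=> C; case: (boolP [exists y in U :\: R, C == Kc y]) => [/exists_inP[y yUR /eqP CK]|none].
    have cK : connU (Kc y).
      by move=> a b; apply: comp_connected.
    have [L HL] := IH (Kc y) (Kc y :&: Nb e R) (Kn y) cK (subsetIl _ _) (SSsz y yUR).
    by exists L => y' _ _; rewrite CK.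
  exists (fun _ => 0) => y yUR CK; exfalso; apply: (negP none).
  by apply/exists_inP; exists y => //; rewrite CK.
have [Lc HLc] := fin_all_exists ch.
have HK : forall y, y \in U :\: R -> Pcl (Kc y) (Kc y :&: Nb e R) (Lc (Kc y)).
  by move=> y yUR; exact: (HLc (Kc y) y yUR erefl).
have Kself : forall y, y \in U :\: R -> y \in Kc y by move=> y; apply: comp_self.
have Keq : forall y z, z \in Kc y -> Kc z = Kc y by move=> y z; apply: comp_eq.
pose L v := if v \in R then 0 else if v \in U then (Lc (Kc v) v).+1 else 0.
have LR : forall v, v \in R -> L v = 0 by move=> v vR; rewrite /L vR.
have LUR : forall v, v \in U :\: R -> L v = (Lc (Kc v) v).+1.
  by move=> v; rewrite in_setD => /andP[/negbTE vR vU]; rewrite /L vR vU.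
have L2 : forall s, #|[set v in U | L v <= s]| <= gg s.
  case=> [|s].
    apply: leq_trans Rsz; apply: subset_leq_card; apply/subsetP => v.
    rewrite inE => /andP[vU]; case vR: (v \in R) => //.
    by rewrite LUR // in_setD vR vU.
  have sub : [set v in U | L v <= s.+1] \subset
      R :|: \bigcup_(z in (U :\: R) :&: Nb e R) [set v in Kc z | Lc (Kc z) v <= s].
    apply/subsetP => v; rewrite inE => /andP[vU Lv].
    case vR: (v \in R); first by rewrite inE vR.
    have vUR : v \in U :\: R by rewrite in_setD vR vU.
    rewrite inE; apply/orP; right.
    have [z zK zN] := exit_comp esym vUR (cU v x0 vU x0U) x0R.
    apply/bigcupP; exists z.
      by rewrite inE zN (subsetP (Ksub v)).
    have Kzv : Kc z = Kc v by apply: Keq.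
    by rewrite inE Kzv Kself //=; move: Lv; rewrite LUR.
  apply: leq_trans (subset_leq_card sub) _.
  apply: leq_trans (leq_card_setU _ _).1 _.
  apply: leq_trans (leq_add Rsz (card_bigcup_le _ _)) _.
  rewrite /=; rewrite leq_add2l.
  apply: leq_trans (_ : \sum_(z in (U :\: R) :&: Nb e R) gg s <= _).
    apply: leq_sum => z; rewrite inE => /andP[zUR _].
    by case: (HK z zUR) => _ _ H _; apply: H.
  rewrite sum_nat_const.
  have h1 : #|(U :\: R) :&: Nb e R| <= #|Nb e R| by apply: subset_leq_card; apply: subsetIr.
  have h2 := Nb_card R.
  have h3 : #|(U :\: R) :&: Nb e R| <= WW * dd.
    apply: leq_trans h1 _; apply: leq_trans h2 _; by rewrite leq_mul2r Rsz orbT.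
  by rewrite leq_mul2r h3 orbT.
exists L; split.
- by move=> v vS; apply: LR; rewrite !inE vS.
- move=> u v uU vU euv.
  case uR: (u \in R); first by rewrite LR.
  have uUR : u \in U :\: R by rewrite in_setD uR uU.
  rewrite LUR //.
  case vR: (v \in R).
    rewrite LR //; case: (HK u uUR) => H0 _ _ _; rewrite H0 //.
    rewrite inE Kself //=; rewrite inE; apply/exists_inP; exists v => //; by rewrite esym.
  have vUR : v \in U :\: R by rewrite in_setD vR vU.
  have vK : v \in Kc u.
    rewrite inE vUR /=; apply: connect1; by rewrite /induced /= uUR vUR euv.
  rewrite LUR // (Keq _ _ vK) ltnS.
  by case: (HK u uUR) => _ H1 _ _; apply: H1 => //; apply: Kself.
- exact: L2.
- move=> A x a s xA cAU rng.
  case: (boolP [exists y in comp e A x, y \in R]) => [/exists_inP[y yc yR]|none].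
    have a0 : a = 0 by have := rng y yc; rewrite LR //; lia.
    apply: leq_trans (L2 s); apply: subset_leq_card; apply/subsetP => z zc.
    rewrite inE (subsetP cAU) //=; have := rng z zc; rewrite a0 /=; lia.
  have notR : forall y, y \in comp e A x -> y \notin R.
    by move=> y yc; apply/negP => yR; apply: (negP none); apply/exists_inP; exists y.
  have xc := comp_self e xA.
  have xUR : x \in U :\: R by rewrite in_setD notR // (subsetP cAU).
  have cK : comp e A x \subset Kc x.
    apply/subsetP => y yc; have := yc; rewrite inE => /andP[yA cxy].
    have Hinv : forall u v, u \in A -> v \in A -> e u v -> u \in comp e A x -> v \in comp e A x.
      move=> u v uA vA euv; rewrite !inE vA => /andP[_ cu].
      by apply: connect_trans cu (connect1 _); rewrite /induced /= uA vA euv.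
    have [_ C] := connect_inv Hinv xc xA cxy.
    rewrite inE in_setD notR // (subsetP cAU) //=.
    apply: connect_mono C; apply/subsetP => z; rewrite inE => /andP[_ zc].
    by rewrite in_setD notR // (subsetP cAU).
  case: (HK x xUR) => _ _ _ H3; apply: (H3 A x a.-1 s xA cK) => y yc.
  have yUR : y \in U :\: R by apply: (subsetP (Ksub x)); apply: (subsetP cK).
  have := rng y yc; rewrite LUR // (Keq x y (subsetP cK y yc)); lia.
Qed.

Theorem global_claim : exists L : T -> nat,
  (forall u v, e u v -> L u <= (L v).+1) /\
  forall (A : {set T}) x a s, x \in A ->
    (forall y, y \in comp e A x -> a <= L y <= a + s) -> #|comp e A x| <= gg s.
Proof.
pose Kt y := comp e [set: T] y.
have ch : forall C : {set T}, exists L : T -> nat,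
    forall y, C = Kt y -> Pcl C set0 L.
  move=> C; case: (boolP [exists y, C == Kt y]) => [/existsP[y /eqP CK]|none].
    have cK : connU (Kt y) by move=> a b; exact: (comp_connected esym (in_setT y)).
    have h0 : #|(set0 : {set T})| <= MM by rewrite cards0.
    have [L HL] := claim (max_card (mem (Kt y))) cK (sub0set _) h0.
    by exists L => y' _; rewrite CK.
  exists (fun _ => 0) => y CK; exfalso; apply: (negP none).
  by apply/existsP; exists y; rewrite CK.
have [Lc HLc] := fin_all_exists ch.
have HK : forall y, Pcl (Kt y) set0 (Lc (Kt y)) by move=> y; exact: (HLc (Kt y) y erefl).
have Kself : forall y, y \in Kt y by move=> y; apply: comp_self; rewrite in_setT.
have Keq : forall y z, z \in Kt y -> Kt z = Kt y by move=> y z; apply: comp_eq.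
exists (fun v => Lc (Kt v) v); split.
- move=> u v euv.
  have vK : v \in Kt u.
    rewrite inE in_setT /=; apply: connect1; by rewrite /induced /= !in_setT euv.
  rewrite (Keq _ _ vK).
  by case: (HK u) => _ H1 _ _; apply: H1 => //; apply: Kself.
- move=> A x a s xA rng.
  have cK : comp e A x \subset Kt x.
    apply/subsetP => y; rewrite inE => /andP[yA cxy].
    rewrite inE in_setT /=; apply: connect_mono cxy; exact: subsetT.
  case: (HK x) => _ _ _ H3; apply: (H3 A x a s xA cK) => y yc.
  by rewrite -(Keq x y (subsetP cK y yc)); apply: rng.
Qed.
End Main.


Lemma walk_nat (T : finType) (e : rel T) (L : T -> nat) :
  symmetric e -> (forall u v, e u v -> L u <= (L v).+1) ->
  forall x y k, walk_of_len e x y k -> L x <= L y + k /\ L y <= L x + k.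
Proof.
move=> esym H x y k [p [sp [pp pl]]]; subst k y.
elim: p x pp => [|z p IH] x /=; first by rewrite !addn0.
case/andP => exz pz; have [h1 h2] := IH z pz.
have h3 := H _ _ exz; rewrite esym in exz; have h4 := H _ _ exz.
split; lia.
Qed.

Lemma nat_to_R (a b k : nat) : a <= b + k -> b <= a + k ->
  Rle (Rabs (Rminus (INR a) (INR b))) (INR k).
Proof.
move=> /leP h1 /leP h2.
have e1 : Rle (INR a) (Rplus (INR b) (INR k)) by rewrite -plus_INR; apply: le_INR.
have e2 : Rle (INR b) (Rplus (INR a) (INR k)) by rewrite -plus_INR; apply: le_INR.
apply: Rabs_le; lra.
Qed.

Theorem theorem5p4 (t D : nat) :
  S_layerable (fun (T : finType) (e : rel T) => treewidth_le e t /\ max_degree_le e D).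
Proof.
pose dd := D.+1; pose K := t.+1.
exists (fun S : R => gg dd K (2 * Z.to_nat (up S))).
move=> T e [esym eirr] [[I [r [B td]]] degD].
have [rho _] : exists rho : I, rho \in I.
  by apply/card_gt0P; case: td => [[]].
have ddpos : 0 < dd by [].
have Kpos : 0 < K by [].
have deg : forall x, #|[set y | e x y]| <= dd by move=> x; apply: leqW; apply: degD.
have sep : forall U S : {set T}, S \subset U -> exists X : {set T},
  [/\ X \subset U, (2 * dd * K) * #|X| <= K * #|S| &
    forall x, x \in U :\: X ->
      #|[set y in S | connect (induced e (U :\: X)) x y]| <= (2 * dd * K).-1].
  move=> U S SU.
  have [X [XU Xc Xcomp]] := separator rho esym td (2 * dd * K).-1 SU (leqnn #|S|).
  have e2 : (2 * dd * K).-1.+1 = 2 * dd * K by rewrite prednK // !muln_gt0.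
  rewrite e2 in Xc.
  by exists X; split.
have [L [L1 L3]] := global_claim esym ddpos Kpos deg sep.
exists (fun v => INR (L v)); split.
- move=> x y k w; have [h1 h2] := walk_nat esym L1 w.
  exact: nat_to_R.
- move=> S Spos A bnd x xA.
  pose s' := Z.to_nat (up S).
  have [upS _] := archimed S.
  have s'R : INR s' = IZR (up S).
    rewrite INR_IZR_INZ /s' Z2Nat.id //.
    apply: le_IZR; lra.
  have close : forall y, y \in A -> L y < L x + s' /\ L x < L y + s'.
    move=> y yA; have := bnd x y xA yA => hb.
    have h1 := Rle_abs (INR (L x) - INR (L y)).
    have h2 := Rabs_minus_sym (INR (L x)) (INR (L y)).
    have h3 := Rle_abs (INR (L y) - INR (L x)).
    split; apply/ltP; apply: INR_lt; rewrite plus_INR s'R; lra.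
  apply: (L3 A x (L x - s') (2 * s') xA) => y.
  rewrite inE => /andP[yA _]; have [c1 c2] := close y yA.
  apply/andP; split; lia.
Qed.
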